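(* Let $\lambda,\mu,\theta>0$ with $\lambda\theta>2\mu$, $\alpha,\hat\alpha\in\mathbb{R}$, and consider for a small parameter $\epsilon$ and delay $\Delta>0$ the system $$\dot q_1(t) = \lambda\,\frac{\exp\big(-\theta q_1(t-\Delta)+(\alpha+\epsilon\hat\alpha)\big)}{\exp\big(-\theta q_1(t-\Delta)+(\alpha+\epsilon\hat\alpha)\big)+\exp\big(-\theta q_2(t-\Delta)+\alpha\big)} - \mu\,q_1(t),$$ $$\dot q_2(t) = \lambda\,\frac{\exp\big(-\theta q_2(t-\Delta)+\alpha\big)}{\exp\big(-\theta q_1(t-\Delta)+(\alpha+\epsilon\hat\alpha)\big)+\exp\big(-\theta q_2(t-\Delta)+\alpha\big)} - \mu\,q_2(t).$$ Let $\omega_{\mathrm{cr}}=\tfrac12\sqrt{\lambda^2\theta^2-4\mu^2}$ and $\Delta_{\mathrm{cr}}=\arccos\!\big(-\tfrac{2\mu}{\lambda\theta}\big)/\omega_{\mathrm{cr}}$. Then the critical delay $\Delta_{\mathrm{mod}}$ at which the stability of the system about its equilibrium changes satisfies $$\Delta_{\mathrm{mod}}=\Delta_{\mathrm{cr}}+\frac{4\mu^3+\mu^2\lambda^2\theta^2\Delta_{\mathrm{cr}}}{4\omega_{\mathrm{cr}}^2(\lambda\theta+2\mu)^2}\,\epsilon^2\hat\alpha^2+O(\epsilon^3).$$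
   Context: This is the asymmetric two-queue delayed-information fluid model in which only the preference parameter of the first queue is perturbed ($\alpha\mapsto\alpha+\epsilon\hat\alpha$); $\lambda$ is the arrival rate, $\mu$ the service rate, $\theta$ the sensitivity to queue length. $\Delta_{\mathrm{cr}}$ is the critical delay of the unperturbed symmetric system. ''Stability changes'' refers to the linearization about the equilibrium passing from asymptotically stable to unstable as $\Delta$ crosses $\Delta_{\mathrm{mod}}$. *)

(* Defs.v *)
From Stdlib Require Import Reals.
From Coquelicot Require Import Coquelicot.
Open Scope R_scope.

(* Arrival rate to queue 1 as a function of the delayed queue lengths y1 y2;
   preference of queue 1 is alpha + eps * ahat, of queue 2 is alpha. *)
Definition w1 (th al eps ah y1 : R) : R := exp (- th * y1 + (al + eps * ah)).
Definition w2 (th al y2 : R) : R := exp (- th * y2 + al).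

(* Vector field F(x, y): x = current state (q1(t), q2(t)),
   y = delayed state (q1(t-Delta), q2(t-Delta)). *)
Definition F1 (lam mu th al eps ah x1 x2 y1 y2 : R) : R :=
  lam * (w1 th al eps ah y1 / (w1 th al eps ah y1 + w2 th al y2)) - mu * x1.
Definition F2 (lam mu th al eps ah x1 x2 y1 y2 : R) : R :=
  lam * (w2 th al y2 / (w1 th al eps ah y1 + w2 th al y2)) - mu * x2.

Definition is_equilibrium (lam mu th al eps ah q1 q2 : R) : Prop :=
  F1 lam mu th al eps ah q1 q2 q1 q2 = 0 /\ F2 lam mu th al eps ah q1 q2 q1 q2 = 0.

Definition Fi (i : bool) := if i then F1 else F2.

(* Jacobian entries of the linearization about (q1,q2):
   A i j = dF_i / dx_j  (non-delayed),  B i j = dF_i / dy_j  (delayed). *)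
Definition Ajac (lam mu th al eps ah q1 q2 : R) (i j : bool) : R :=
  if j then Derive (fun x => Fi i lam mu th al eps ah x q2 q1 q2) q1
       else Derive (fun x => Fi i lam mu th al eps ah q1 x q1 q2) q2.
Definition Bjac (lam mu th al eps ah q1 q2 : R) (i j : bool) : R :=
  if j then Derive (fun y => Fi i lam mu th al eps ah q1 q2 y q2) q1
       else Derive (fun y => Fi i lam mu th al eps ah q1 q2 q1 y) q2.

Definition cexp (z : C) : C :=
  (exp (Re z) * cos (Im z), exp (Re z) * sin (Im z)).

(* Characteristic function of the linearized DDE
   u'(t) = A u(t) + B u(t - Delta):  det (z I - A - exp(-z Delta) B). *)
Definition char_fn (lam mu th al eps ah q1 q2 Delta : R) (z : C) : C :=
  let A := Ajac lam mu th al eps ah q1 q2 in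
  let B := Bjac lam mu th al eps ah q1 q2 in
  let e := cexp (Copp (Cmult z (RtoC Delta))) in
  let m i j := Cminus (if Bool.eqb i j then z else RtoC 0)
                      (Cplus (RtoC (A i j)) (Cmult e (RtoC (B i j)))) in
  Cminus (Cmult (m true true) (m false false)) (Cmult (m true false) (m false true)).

Definition lin_asympt_stable (lam mu th al eps ah q1 q2 Delta : R) : Prop :=
  forall z : C, char_fn lam mu th al eps ah q1 q2 Delta z = RtoC 0 -> Re z < 0.

Definition omega_cr (lam mu th : R) : R := sqrt (lam ^ 2 * th ^ 2 - 4 * mu ^ 2) / 2.
Definition Delta_cr (lam mu th : R) : R :=
  acos (- (2 * mu) / (lam * th)) / omega_cr lam mu th.

(* Main.v *)
Require Import Defs.
From Stdlib Require Import Reals.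
From Coquelicot Require Import Coquelicot.
Open Scope R_scope.
From Stdlib Require Import Lra Classical.

Lemma taylor2 (f f' : R -> R) x0 r l :
  0 < r -> (forall x, Rabs (x - x0) < r -> is_derive f x (f' x)) -> is_derive f' x0 l ->
  exists K d, 0 < d /\ forall x, Rabs (x - x0) < d ->
    Rabs (f x - f x0 - f' x0 * (x - x0)) <= K * (x - x0)^2.
Proof.
  intros Hr Hf Hl.
  apply is_derive_Reals in Hl.
  destruct (Hl 1 Rlt_0_1) as [d1 Hd1].
  exists (Rabs l + 1), (Rmin r d1). split.
  { apply Rmin_pos; [lra| apply cond_pos]. }
  intros x Hx.
  assert (Hxr : Rabs (x - x0) < r) by (eapply Rlt_le_trans; [apply Hx| apply Rmin_l]).
  assert (Hxd : Rabs (x - x0) < d1) by (eapply Rlt_le_trans; [apply Hx| apply Rmin_r]).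
  assert (Hb : forall t, Rabs (t - x0) <= Rabs (x - x0) ->
             Rabs (f' t - f' x0) <= (Rabs l + 1) * Rabs (x - x0)).
  { intros t Ht.
    destruct (Req_dec t x0) as [E|E].
    { rewrite E. replace (f' x0 - f' x0) with 0 by ring. rewrite Rabs_R0. apply Rmult_le_pos; [|apply Rabs_pos].
      pose proof (Rabs_pos l); lra. }
    specialize (Hd1 (t - x0)).
    replace (x0 + (t - x0)) with t in Hd1 by ring.
    assert (Htx : t - x0 <> 0) by lra.
    assert (H1 := Hd1 Htx ltac:(lra)).
    assert (Hq : f' t - f' x0 = ((f' t - f' x0) / (t - x0) - l) * (t - x0) + l * (t - x0))
      by (field; auto).
    rewrite Hq.
    eapply Rle_trans; [apply Rabs_triang|].
    rewrite !Rabs_mult.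
    pose proof (Rabs_pos (t - x0)). pose proof (Rabs_pos l).
    assert (Rabs ((f' t - f' x0) / (t - x0) - l) * Rabs (t - x0) <= 1 * Rabs (t - x0)).
    { apply Rmult_le_compat_r; lra. }
    assert (Rabs l * Rabs (t - x0) <= Rabs l * Rabs (x - x0)) by (apply Rmult_le_compat_l; lra).
    nra. }
  set (g := fun t => f t - f' x0 * t).
  assert (Hder : forall t, Rabs (t - x0) < r -> is_derive g t (f' t - f' x0)).
  { intros t Ht. unfold g. 
    assert (Hft := Hf t Ht).
    auto_derive. { eexists; eauto. }
    change (fun x1 : R => f x1) with f. rewrite (is_derive_unique _ _ _ Hft). ring. }
  assert (Hin : forall t, Rmin x0 x <= t <= Rmax x0 x -> Rabs (t - x0) <= Rabs (x - x0)).
  { intros t Ht. unfold Rmin, Rmax in Ht.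
    destruct (Rle_dec x0 x); unfold Rabs; repeat destruct Rcase_abs; lra. }
  destruct (MVT_gen g x0 x (fun t => f' t - f' x0)) as [c [Hc Heq]].
  { intros t Ht. apply Hder. eapply Rle_lt_trans; [apply Hin; lra|]. auto. }
  { intros t Ht. apply continuity_pt_filterlim.
    apply (ex_derive_continuous g). eexists. apply Hder.
    eapply Rle_lt_trans; [apply Hin; lra|]. auto. }
  unfold g in Heq.
  replace (f x - f x0 - f' x0 * (x - x0)) with ((f' c - f' x0) * (x - x0)) by lra.
  rewrite Rabs_mult.
  pose proof (Hb c (Hin c Hc)).
  replace ((x - x0)^2) with (Rabs (x - x0) * Rabs (x - x0)).
  2:{ rewrite <- (pow2_abs (x - x0)). ring. }
  pose proof (Rabs_pos (x - x0)). nra.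
Qed.


Definition rootf (mu k Delta : R) (z : C) : C :=
  Cplus (Cplus z (RtoC mu)) (Cmult (RtoC k) (cexp (Copp (Cmult z (RtoC Delta))))).

Lemma rootf_eq mu k Delta x y :
  rootf mu k Delta (x, y) = RtoC 0 <->
  (x + mu + k * exp (-(x*Delta)) * cos (y*Delta) = 0 /\
   y - k * exp (-(x*Delta)) * sin (y*Delta) = 0).
Proof.
  unfold rootf, cexp, RtoC, Cplus, Cmult, Copp, Re, Im; simpl.
  replace (-(x*Delta - y*0)) with (-(x*Delta)) by ring.
  replace (-(x*0 + y*Delta)) with (-(y*Delta)) by ring.
  rewrite cos_neg, sin_neg.
  split.
  - intros H. injection H. intros. split; lra.
  - intros [H1 H2]. f_equal; lra.
Qed.

Definition Om (mu k : R) := sqrt (k^2 - mu^2).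
Definition Dfun (mu k : R) := (PI - atan (Om mu k / mu)) / Om mu k.

Lemma sqrt_of_sq a b : 0 <= a -> a^2 = b -> sqrt b = a.
Proof. intros Ha Hb. rewrite <- Hb. rewrite <- Rsqr_pow2. apply sqrt_Rsqr. auto. Qed.

Lemma Om_facts mu k : 0 < mu < k -> 0 < Om mu k /\ Om mu k ^ 2 = k^2 - mu^2.
Proof.
  intros H. unfold Om. split.
  - apply sqrt_lt_R0. nra.
  - rewrite <- Rsqr_pow2. rewrite Rsqr_sqrt; [ring| nra].
Qed.

Lemma cos_phi mu k : 0 < mu < k -> cos (PI - atan (Om mu k / mu)) = - mu / k.
Proof.
  intros H. destruct (Om_facts mu k H) as [H1 H2].
  rewrite Rtrigo_facts.cos_pi_minus, cos_atan.
  rewrite (sqrt_of_sq (k / mu)).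
  - field. split; lra.
  - apply Rlt_le, Rdiv_lt_0_compat; lra.
  - unfold Rsqr. replace (Om mu k / mu * (Om mu k / mu)) with (Om mu k ^ 2 / mu ^ 2) by (field; lra). rewrite H2. field. lra.
Qed.

Lemma atan_pos u : 0 < u -> 0 < atan u.
Proof. intros. rewrite <- atan_0. apply atan_increasing. auto. Qed.

Lemma phi_bounds mu k : 0 < mu < k ->
  PI / 2 < PI - atan (Om mu k / mu) < PI.
Proof.
  intros H. destruct (Om_facts mu k H) as [H1 H2].
  pose proof (atan_bound (Om mu k / mu)).
  assert (0 < atan (Om mu k / mu)) by (apply atan_pos; apply Rdiv_lt_0_compat; lra).
  lra.
Qed.

Lemma Dfun_pos mu k : 0 < mu < k -> 0 < Dfun mu k.
Proof.
  intros H. destruct (Om_facts mu k H) as [H1 H2]. pose proof (phi_bounds mu k H).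
  pose proof PI_RGT_0.
  unfold Dfun. apply Rdiv_lt_0_compat; lra.
Qed.

Lemma stable_dir mu k Delta : 0 < mu < k -> 0 < Delta -> Delta < Dfun mu k ->
  forall z, rootf mu k Delta z = RtoC 0 -> Re z < 0.
Proof.
  intros H HD HDD [x y] Hz. apply rootf_eq in Hz as [E1 E2]. simpl.
  destruct (Rlt_or_le x 0) as [Hx|Hx]; auto. exfalso.
  destruct (Om_facts mu k H) as [H1 H2].
  pose proof (phi_bounds mu k H) as Hphi.
  set (e := exp (-(x*Delta))) in *.
  assert (He1 : e <= 1).
  { unfold e. rewrite <- exp_0. destruct (Req_dec x 0) as [->|Hx0].
    - replace (-(0*Delta)) with 0 by ring. lra.
    - apply Rlt_le, exp_increasing. nra. }
  assert (He0 : 0 < e) by apply exp_pos.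
  set (c := cos (y*Delta)) in *. set (s := sin (y*Delta)) in *.
  assert (Hcs : s^2 + c^2 = 1) by (unfold s, c; rewrite <- !Rsqr_pow2; apply sin2_cos2).
  assert (Hy2 : y^2 <= Om mu k ^ 2).
  { rewrite H2.
    assert (y = k*e*s) by lra. assert (x + mu = -(k*e*c)) by lra.
    assert ((x+mu)^2 + y^2 = k^2*e^2) by (rewrite H3, H0; replace ((-(k*e*c))^2 + (k*e*s)^2) with (k^2*e^2*(s^2+c^2)) by ring; rewrite Hcs; ring).
    assert (e^2 <= 1) by nra. nra. }
  assert (Hya : Rabs y <= Om mu k).
  { rewrite <- pow2_abs in Hy2. pose proof (Rabs_pos y). nra. }
  set (t := Rabs y * Delta).
  assert (Hct : cos t = c).
  { unfold t, c, Rabs. destruct Rcase_abs.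
    - replace (-y*Delta) with (-(y*Delta)) by ring. apply cos_neg.
    - auto. }
  assert (Ht0 : 0 <= t) by (unfold t; pose proof (Rabs_pos y); nra).
  assert (Htp : t < PI - atan (Om mu k / mu)).
  { unfold Dfun in HDD.
    apply (Rmult_lt_compat_r (Om mu k)) in HDD; auto.
    unfold Rdiv in HDD. rewrite Rmult_assoc, Rinv_l in HDD; [|lra].
    unfold t. nra. }
  pose proof (cos_decreasing_1 t (PI - atan (Om mu k / mu)) Ht0 ltac:(lra) ltac:(lra) ltac:(lra) Htp) as Hcd.
  rewrite cos_phi in Hcd; auto. rewrite Hct in Hcd.
  assert (Hk : k * c > - mu).
  { apply (Rmult_lt_compat_l k) in Hcd; [|lra].
    replace (k * (-mu/k)) with (-mu) in Hcd by (field; lra). lra. }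
  destruct (Rlt_or_le c 0).
  - assert (k*e*c >= k*c) by nra. lra.
  - assert (k*e*c >= 0) by (apply Rle_ge; apply Rmult_le_pos; nra). lra.
Qed.

Lemma cpt_of_derive (f : R -> R) x : ex_derive f x -> continuity_pt f x.
Proof. intros H. apply continuity_pt_filterlim. apply (ex_derive_continuous (V := R_NormedModule)). auto. Qed.

Lemma unstable_dir mu k Delta : 0 < mu < k -> 0 < Delta -> Dfun mu k <= Delta ->
  exists z, rootf mu k Delta z = RtoC 0 /\ 0 <= Re z.
Proof.
  intros H HD HDD.
  destruct (Om_facts mu k H) as [H1 H2].
  set (r := fun x => k * exp (-(x*Delta))).
  assert (Hr0 : r 0 = k) by (unfold r; replace (-(0*Delta)) with 0 by ring; rewrite exp_0; ring).
  assert (Hrdec : forall a b, a <= b -> r b <= r a).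
  { intros a b Hab. unfold r. destruct (Req_dec a b) as [->|Hne]; [lra|].
    apply Rmult_le_compat_l; [lra|]. apply Rlt_le, exp_increasing. nra. }
  set (h := fun x => x + mu - r x).
  destruct (IVT h 0 k) as [xs [Hxs Hhxs]].
  { intros x. apply cpt_of_derive. unfold h, r. auto_derive. auto. }
  { lra. }
  { unfold h. rewrite Hr0. lra. }
  { unfold h, r. assert (exp (-(k*Delta)) < 1).
    { rewrite <- exp_0. apply exp_increasing. nra. }
    nra. }
  assert (Hxs0 : 0 < xs).
  { destruct (Req_dec xs 0) as [E|E]; [|lra]. unfold h in Hhxs. rewrite E, Hr0 in Hhxs. lra. }
  assert (Hrge : forall x, 0 <= x <= xs -> x + mu <= r x).
  { intros x Hx. pose proof (Hrdec x xs ltac:(lra)). unfold h in Hhxs. lra. }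
  set (A := fun x => r x ^ 2 - (x + mu)^2).
  assert (HA : forall x, 0 <= x <= xs -> 0 <= A x).
  { intros x Hx. pose proof (Hrge x Hx). unfold A. nra. }
  set (S := fun x => sqrt (A x)).
  set (G := fun x => Delta * S x - PI + atan (S x / (x + mu))).
  assert (HG0 : 0 <= G 0).
  { unfold G, S, A. rewrite Hr0. replace (0 + mu) with mu by ring.
    fold (Om mu k). unfold Dfun in HDD.
    apply (Rmult_le_compat_r (Om mu k)) in HDD; [|lra].
    unfold Rdiv in HDD. rewrite Rmult_assoc, Rinv_l in HDD; lra. }
  assert (HGxs : G xs = - PI).
  { unfold G, S, A. replace (r xs) with (xs + mu) by (unfold h in Hhxs; lra).
    replace ((xs + mu) ^ 2 - (xs + mu) ^ 2) with 0 by ring. rewrite sqrt_0.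
    unfold Rdiv. rewrite Rmult_0_l, atan_0. ring. }
  assert (Hroot : exists x0, 0 <= x0 <= xs /\ G x0 = 0).
  { destruct (Req_dec (G 0) 0) as [E|E].
    - exists 0. split; [lra|auto].
    - destruct (Ranalysis5.IVT_interv (fun x => - G x) 0 xs) as [x0 [Hx0 Hx0']].
      + intros a Ha. apply continuity_pt_filterlim.
        assert (HS : continuous S a).
        { unfold S. apply (continuous_comp A sqrt).
          - apply (ex_derive_continuous (V := R_NormedModule) A). unfold A, r. auto_derive. auto.
          - apply continuity_pt_filterlim. apply continuity_pt_sqrt. apply HA. auto. }
        unfold G.
        apply (continuous_opp (fun x => Delta * S x - PI + atan (S x / (x + mu)))).
        apply (continuous_plus (fun x => Delta * S x - PI) (fun x => atan (S x / (x + mu)))).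
        * apply (continuous_minus (fun x => Delta * S x) (fun _ => PI)).
          -- apply (continuous_mult (fun _ => Delta) S); auto. apply continuous_const.
          -- apply continuous_const.
        * apply continuous_atan_comp.
          apply (continuous_mult S (fun x => / (x + mu))); auto.
          apply (ex_derive_continuous (V := R_NormedModule) (fun x : R => / (x + mu))).
          auto_derive. lra.
      + auto.
      + simpl. lra.
      + simpl. rewrite HGxs. pose proof PI_RGT_0. lra.
      + exists x0. split; auto. lra. }
  destruct Hroot as [x0 [Hx0 HGx0]].
  set (y := S x0).
  assert (Hy0 : 0 <= y) by apply sqrt_pos.
  assert (Hy2 : y ^ 2 = A x0).
  { unfold y, S. rewrite <- Rsqr_pow2. apply Rsqr_sqrt. auto. }
  pose proof (Hrge x0 Hx0) as Hrx.
  assert (Hm : 0 < x0 + mu) by lra.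
  assert (Hsq : sqrt (1 + (y / (x0 + mu))²) = r x0 / (x0 + mu)).
  { apply sqrt_of_sq.
    - apply Rlt_le, Rdiv_lt_0_compat; lra.
    - unfold Rsqr. replace (y / (x0 + mu) * (y / (x0 + mu))) with (y^2 / (x0+mu)^2) by (field; lra).
      rewrite Hy2. unfold A. field. lra. }
  assert (Hang : y * Delta = PI - atan (y / (x0 + mu))).
  { unfold G in HGx0. fold y in HGx0. lra. }
  exists (x0, y). split; [|simpl; lra].
  apply rootf_eq. fold (r x0). rewrite Hang.
  rewrite Rtrigo_facts.cos_pi_minus, cos_atan, Rtrigo_facts.sin_pi_minus, sin_atan, Hsq.
  split; field; split; lra.
Qed.


Definition cc lam th al eps ah q1 q2 :=
  lam * th * w1 th al eps ah q1 * w2 th al q2 / (w1 th al eps ah q1 + w2 th al q2)^2.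

Lemma w1_pos th al eps ah y : 0 < w1 th al eps ah y.
Proof. apply exp_pos. Qed.
Lemma w2_pos th al y : 0 < w2 th al y.
Proof. apply exp_pos. Qed.

Lemma Ajac_vals lam mu th al eps ah q1 q2 :
  Ajac lam mu th al eps ah q1 q2 true true = - mu /\
  Ajac lam mu th al eps ah q1 q2 true false = 0 /\
  Ajac lam mu th al eps ah q1 q2 false true = 0 /\
  Ajac lam mu th al eps ah q1 q2 false false = - mu.
Proof.
  unfold Ajac, Fi, F1, F2.
  repeat split; apply is_derive_unique; auto_derive; auto; ring.
Qed.

Lemma Bjac_vals lam mu th al eps ah q1 q2 :
  Bjac lam mu th al eps ah q1 q2 true true = - cc lam th al eps ah q1 q2 /\
  Bjac lam mu th al eps ah q1 q2 true false = cc lam th al eps ah q1 q2 /\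
  Bjac lam mu th al eps ah q1 q2 false true = cc lam th al eps ah q1 q2 /\
  Bjac lam mu th al eps ah q1 q2 false false = - cc lam th al eps ah q1 q2.
Proof.
  pose proof (w1_pos th al eps ah q1). pose proof (w2_pos th al q2).
  unfold Bjac, Fi, F1, F2, cc. unfold w1, w2 in *.
  repeat split; apply is_derive_unique; auto_derive; try lra; field; lra.
Qed.

Lemma char_fact lam mu th al eps ah q1 q2 Delta z :
  char_fn lam mu th al eps ah q1 q2 Delta z =
  Cmult (Cplus z (RtoC mu)) (rootf mu (2 * cc lam th al eps ah q1 q2) Delta z).
Proof.
  destruct (Ajac_vals lam mu th al eps ah q1 q2) as [A1 [A2 [A3 A4]]].
  destruct (Bjac_vals lam mu th al eps ah q1 q2) as [B1 [B2 [B3 B4]]].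
  unfold char_fn. cbv zeta. simpl Bool.eqb. cbv iota.
  rewrite A1, A2, A3, A4, B1, B2, B3, B4.
  set (c := cc lam th al eps ah q1 q2).
  unfold rootf.
  set (e := cexp (Copp (Cmult z (RtoC Delta)))).
  destruct z as [x y]. destruct e as [e1 e2].
  unfold Cminus, Cplus, Cmult, Copp, RtoC; simpl.
  f_equal; ring.
Qed.

Lemma stab_char lam mu th al eps ah q1 q2 Delta :
  0 < mu < 2 * cc lam th al eps ah q1 q2 -> 0 < Delta ->
  (lin_asympt_stable lam mu th al eps ah q1 q2 Delta <->
   Delta < Dfun mu (2 * cc lam th al eps ah q1 q2)).
Proof.
  intros H HD. set (k := 2 * cc lam th al eps ah q1 q2) in *.
  unfold lin_asympt_stable. split.
  - intros Hs. destruct (Rlt_or_le Delta (Dfun mu k)) as [|Hle]; auto.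
    destruct (unstable_dir mu k Delta H HD Hle) as [z [Hz Hre]].
    assert (Hc : char_fn lam mu th al eps ah q1 q2 Delta z = RtoC 0).
    { rewrite char_fact. fold k. rewrite Hz. apply Cmult_0_r. }
    specialize (Hs z Hc). lra.
  - intros Hlt z Hz. rewrite char_fact in Hz. fold k in Hz.
    destruct (classic (Cplus z (RtoC mu) = RtoC 0)) as [E|E].
    + destruct z as [x y]. unfold Cplus, RtoC in E. simpl in E. injection E. intros. simpl. lra.
    + destruct (classic (rootf mu k Delta z = RtoC 0)) as [E2|E2].
      * apply (stable_dir mu k Delta); auto.
      * exfalso. apply (Cmult_neq_0 _ _ E E2). auto.
Qed.


Definition psi (a c s : R) := (1 + s) - (1 - s) * exp (-(a * s) + c).

Definition s_sig (a c : R) : {s | -1 <= s <= 1 /\ psi a c s = 0}.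
Proof.
  apply IVT.
  - intros x. apply cpt_of_derive. unfold psi. auto_derive. auto.
  - lra.
  - unfold psi. pose proof (exp_pos (-(a * -1) + c)). lra.
  - unfold psi. pose proof (exp_pos (-(a * 1) + c)). lra.
Defined.

Definition sfun (a c : R) := proj1_sig (s_sig a c).

Lemma sfun_spec a c : -1 < sfun a c < 1 /\ psi a c (sfun a c) = 0.
Proof.
  unfold sfun. destruct (s_sig a c) as [s [Hs Hp]]. simpl. split; auto.
  destruct (Req_dec s 1) as [E|E].
  { rewrite E in Hp. unfold psi in Hp. lra. }
  destruct (Req_dec s (-1)) as [E'|E'].
  { rewrite E' in Hp. unfold psi in Hp. pose proof (exp_pos (-(a * -1) + c)). lra. }
  lra.
Qed.

Lemma psi_incr a c s t : 0 < a -> -1 <= s -> s < t -> t <= 1 -> psi a c s < psi a c t.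
Proof.
  intros Ha Hs Hst Ht. unfold psi.
  assert (exp (-(a*t) + c) < exp (-(a*s) + c)) by (apply exp_increasing; nra).
  pose proof (exp_pos (-(a*t) + c)).
  nra.
Qed.

Lemma psi_uniq a c s t : 0 < a -> -1 <= s <= 1 -> -1 <= t <= 1 ->
  psi a c s = 0 -> psi a c t = 0 -> s = t.
Proof.
  intros Ha Hs Ht H1 H2.
  destruct (Rtotal_order s t) as [H|[H|H]]; auto.
  - pose proof (psi_incr a c s t Ha ltac:(lra) H ltac:(lra)). lra.
  - pose proof (psi_incr a c t s Ha ltac:(lra) H ltac:(lra)). lra.
Qed.

Lemma sfun_bound a c : 0 < a -> Rabs (sfun a c) <= Rabs c / a.
Proof.
  intros Ha. destruct (sfun_spec a c) as [Hs Hp]. set (s := sfun a c) in *.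
  unfold psi in Hp.
  destruct (Rle_or_lt (Rabs s) (Rabs c / a)) as [|Hgt]; auto. exfalso.
  assert (Hca : Rabs c < a * Rabs s).
  { apply (Rmult_lt_compat_l a) in Hgt; auto. replace (a * (Rabs c / a)) with (Rabs c) in Hgt by (field; lra). lra. }
  revert Hca Hp. unfold Rabs; destruct (Rcase_abs s); destruct (Rcase_abs c); intros Hca Hp.
  - assert (1 < exp (-(a*s) + c)) by (rewrite <- exp_0; apply exp_increasing; nra). nra.
  - assert (1 < exp (-(a*s) + c)) by (rewrite <- exp_0; apply exp_increasing; nra). nra.
  - assert (exp (-(a*s) + c) < 1) by (rewrite <- exp_0; apply exp_increasing; nra).
    pose proof (exp_pos (-(a*s) + c)). nra.
  - assert (exp (-(a*s) + c) < 1) by (rewrite <- exp_0; apply exp_increasing; nra).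
    pose proof (exp_pos (-(a*s) + c)). nra.
Qed.

Lemma sfun_ln a c : ln (1 + sfun a c) - ln (1 - sfun a c) = -(a * sfun a c) + c.
Proof.
  destruct (sfun_spec a c) as [Hs Hp]. set (s := sfun a c) in *. unfold psi in Hp.
  replace (1 + s) with ((1 - s) * exp (-(a * s) + c)) by lra.
  rewrite ln_mult; [|lra| apply exp_pos]. rewrite ln_exp. ring.
Qed.

Lemma w1_w2 th al eps ah q1 q2 :
  w1 th al eps ah q1 = w2 th al q2 * exp (-(th * (q1 - q2)) + eps * ah).
Proof. unfold w1, w2. rewrite <- exp_plus. f_equal. ring. Qed.

Lemma equil_cc lam mu th al eps ah q1 q2 :
  0 < lam -> 0 < mu -> 0 < th ->
  is_equilibrium lam mu th al eps ah q1 q2 ->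
  2 * cc lam th al eps ah q1 q2 = lam * th * (1 - sfun (lam * th / mu) (eps * ah) ^ 2) / 2.
Proof.
  intros Hl Hm Ht [E1 E2]. unfold F1, F2 in E1, E2.
  pose proof (w1_pos th al eps ah q1) as P1. pose proof (w2_pos th al q2) as P2.
  set (v1 := w1 th al eps ah q1) in *. set (v2 := w2 th al q2) in *.
  set (P := v1 / (v1 + v2)).
  assert (HP0 : 0 < P < 1).
  { unfold P. split; [apply Rdiv_lt_0_compat; lra|].
    apply (Rmult_lt_reg_r (v1 + v2)); [lra|]. unfold Rdiv. rewrite Rmult_assoc, Rinv_l; lra. }
  fold P in E1.
  assert (HQ : v2 / (v1 + v2) = 1 - P) by (unfold P; field; lra).
  rewrite HQ in E2.
  assert (Hq1 : q1 = lam * P / mu) by (apply (Rmult_eq_reg_l mu); [|lra]; field_simplify; lra).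
  assert (Hq2 : q2 = lam * (1 - P) / mu) by (apply (Rmult_eq_reg_l mu); [|lra]; field_simplify; lra).
  set (a := lam * th / mu). set (c := eps * ah).
  assert (Hex : exp (-(a * (2*P-1)) + c) = v1 / v2).
  { pose proof (w1_w2 th al eps ah q1 q2) as Hw. fold v1 v2 in Hw. rewrite Hw.
    replace (-(a * (2*P-1)) + c) with (-(th * (q1 - q2)) + eps * ah).
    - field. lra.
    - rewrite Hq1, Hq2. unfold a, c. field. lra. }
  assert (Hs : 2*P-1 = sfun a c).
  { destruct (sfun_spec a c) as [Hs1 Hs2].
    apply (psi_uniq a c); try lra.
    - unfold a. apply Rdiv_lt_0_compat; nra.
    - unfold psi. rewrite Hex. unfold P. field. lra. }
  rewrite <- Hs. unfold cc. fold v1 v2.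
  replace (lam * th * v1 * v2 / (v1 + v2) ^ 2) with (lam * th * P * (1 - P)) by (rewrite <- HQ; unfold P; field; lra).
  field.
Qed.

Lemma equil_exists lam mu th al eps ah :
  0 < lam -> 0 < mu -> 0 < th ->
  is_equilibrium lam mu th al eps ah
    (lam * (1 + sfun (lam * th / mu) (eps * ah)) / (2 * mu))
    (lam * (1 - sfun (lam * th / mu) (eps * ah)) / (2 * mu)).
Proof.
  intros Hl Hm Ht.
  set (a := lam * th / mu). set (c := eps * ah).
  destruct (sfun_spec a c) as [Hs Hp]. set (s := sfun a c) in *.
  unfold psi in Hp.
  set (E := exp (-(a * s) + c)) in *.
  pose proof (exp_pos (-(a * s) + c)) as HE. fold E in HE.
  set (q1 := lam * (1 + s) / (2 * mu)). set (q2 := lam * (1 - s) / (2 * mu)).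
  pose proof (w2_pos th al q2) as P2.
  assert (Hw : w1 th al eps ah q1 = w2 th al q2 * E).
  { rewrite (w1_w2 th al eps ah q1 q2). unfold E. f_equal. f_equal. unfold q1, q2, a, c. field. lra. }
  assert (H2 : (1 - s) * (E + 1) = 2) by (ring_simplify; ring_simplify in Hp; lra).
  unfold is_equilibrium, F1, F2. rewrite Hw.
  set (v2 := w2 th al q2) in *.
  replace (v2 * E / (v2 * E + v2)) with (E / (E + 1)) by (field; split; [nra|lra]).
  replace (v2 / (v2 * E + v2)) with (1 / (E + 1)) by (field; split; [nra|lra]).
  unfold q1, q2. split.
  - replace (E / (E + 1)) with ((1 + s) / 2).
    + field. lra.
    + apply (Rmult_eq_reg_r (2 * (E + 1))); [|lra]. field_simplify; nra.
  - replace (1 / (E + 1)) with ((1 - s) / 2).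
    + field. lra.
    + apply (Rmult_eq_reg_r (2 * (E + 1))); [|lra]. field_simplify; nra.
Qed.


Lemma phi_bound : exists K d, 0 < d /\ forall s, Rabs s < d ->
  Rabs (ln (1 + s) - ln (1 - s) - 2 * s) <= K * s ^ 2.
Proof.
  destruct (taylor2 (fun s => ln (1 + s) - ln (1 - s) - 2 * s)
                    (fun s => / (1 + s) + / (1 - s) - 2) 0 (1/2) 0) as [K [d [Hd HK]]].
  - lra.
  - intros x Hx. assert (Hx' : -1/2 < x < 1/2) by (unfold Rabs in Hx; destruct Rcase_abs; lra).
    auto_derive. { repeat split; lra. } field. lra.
  - auto_derive. { repeat split; lra. } field.
  - exists K, d. split; auto. intros s Hs. specialize (HK s). 
    replace (s - 0) with s in HK by ring.
    replace (1 + 0) with 1 in HK by ring. replace (1 - 0) with 1 in HK by ring.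
    rewrite ln_1 in HK. replace (/ 1 + / 1 - 2) with 0 in HK by field.
    replace (ln (1 + s) - ln (1 - s) - 2 * s) with
      (ln (1 + s) - ln (1 - s) - 2 * s - (0 - 0 - 2 * 0) - 0 * s) by ring.
    apply HK. auto.
Qed.

Definition Efun (mu k : R) := - (mu / k + Dfun mu k * k) / (k ^ 2 - mu ^ 2).

Lemma Dfun_derive mu k : 0 < mu < k -> is_derive (Dfun mu) k (Efun mu k).
Proof.
  intros H. destruct (Om_facts mu k H) as [H1 H2].
  unfold Efun, Dfun, Om in *.
  auto_derive.
  all: replace (k * (k * 1) + - (mu * (mu * 1))) with (k^2 - mu^2) by ring.
  all: set (S := sqrt (k^2 - mu^2)) in *.
  1: (repeat split; nra).
  replace (k^2 - mu^2) with (S*S) by (rewrite <- H2; ring).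
  unfold Rdiv. set (T := atan (S * / mu)). clearbody T S.
  replace (1 + S * / mu * (S * / mu * 1)) with (k^2 / mu^2).
  2:{ replace (S * / mu * (S * / mu * 1)) with (S^2 / mu^2) by (field; lra). rewrite H2. field. lra. }
  field. repeat split; lra.
Qed.

Lemma Efun_ex_derive mu k : 0 < mu < k -> ex_derive (Efun mu) k.
Proof.
  intros H. unfold Efun. auto_derive.
  repeat split; try lra.
  - exists (Efun mu k). apply Dfun_derive. auto.
  - nra.
Qed.

Lemma Dfun_taylor mu k0 : 0 < mu < k0 -> exists K d, 0 < d /\ forall k, Rabs (k - k0) < d ->
  Rabs (Dfun mu k - Dfun mu k0 - Efun mu k0 * (k - k0)) <= K * (k - k0) ^ 2.
Proof.
  intros H. destruct (Efun_ex_derive mu k0 H) as [l Hl].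
  apply (taylor2 (Dfun mu) (Efun mu) k0 (k0 - mu) l); [lra| |auto].
  intros x Hx. apply Dfun_derive. unfold Rabs in Hx; destruct Rcase_abs; lra.
Qed.


Lemma omega_cr_eq lam mu th : 0 < mu -> lam * th > 2 * mu -> 0 < lam * th ->
  omega_cr lam mu th = Om mu (lam * th / 2).
Proof.
  intros Hm H Hp. unfold omega_cr, Om. symmetry. apply sqrt_of_sq.
  - apply Rmult_le_pos; [apply sqrt_pos|lra].
  - replace ((sqrt (lam ^ 2 * th ^ 2 - 4 * mu ^ 2) / 2) ^ 2) with
      ((sqrt (lam ^ 2 * th ^ 2 - 4 * mu ^ 2)) ^ 2 / 4) by field.
    rewrite <- Rsqr_pow2, Rsqr_sqrt. field. nra.
Qed.

Lemma Delta_cr_eq lam mu th : 0 < mu -> lam * th > 2 * mu -> 0 < lam * th ->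
  Delta_cr lam mu th = Dfun mu (lam * th / 2).
Proof.
  intros Hm H Hp. unfold Delta_cr, Dfun. rewrite omega_cr_eq; auto. f_equal.
  assert (Hk : 0 < mu < lam * th / 2) by lra.
  replace (- (2 * mu) / (lam * th)) with (cos (PI - atan (Om mu (lam * th / 2) / mu))).
  - apply acos_cos. pose proof (phi_bounds mu _ Hk). pose proof PI_RGT_0. split; lra.
  - rewrite cos_phi; auto. field. split; intro Hz; rewrite Hz in Hp; lra.
Qed.

Lemma coef_id lam mu th ah : 0 < mu -> lam * th > 2 * mu -> 0 < lam * th ->
  (4 * mu ^ 3 + mu ^ 2 * lam ^ 2 * th ^ 2 * Delta_cr lam mu th)
    / (4 * omega_cr lam mu th ^ 2 * (lam * th + 2 * mu) ^ 2) * ah ^ 2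
  = - Efun mu (lam * th / 2) * (lam * th / 2) * (ah / (2 + lam * th / mu)) ^ 2.
Proof.
  intros Hm H Hp.
  assert (Hk : 0 < mu < lam * th / 2) by lra.
  rewrite Delta_cr_eq, omega_cr_eq; auto.
  destruct (Om_facts mu _ Hk) as [H1 H2]. rewrite H2.
  unfold Efun. set (D := Dfun mu (lam * th / 2)).
  replace (mu ^ 2 * lam ^ 2 * th ^ 2 * D) with (mu ^ 2 * (lam * th) ^ 2 * D) by ring.
  set (p := lam * th) in *.
  field. repeat split; nra.
Qed.

Theorem mainTheorem2 (lam mu th al ah : R) :
  0 < lam -> 0 < mu -> 0 < th -> lam * th > 2 * mu ->
  exists (Dmod : R -> R) (eps0 K : R), 0 < eps0 /\
    (forall eps, Rabs eps < eps0 ->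
       0 < Dmod eps /\
       (exists q1 q2, is_equilibrium lam mu th al eps ah q1 q2) /\
       (forall q1 q2, is_equilibrium lam mu th al eps ah q1 q2 ->
          forall Delta, 0 < Delta ->
            (lin_asympt_stable lam mu th al eps ah q1 q2 Delta <-> Delta < Dmod eps)) /\
       Rabs (Dmod eps - Delta_cr lam mu th
             - (4 * mu ^ 3 + mu ^ 2 * lam ^ 2 * th ^ 2 * Delta_cr lam mu th)
               / (4 * omega_cr lam mu th ^ 2 * (lam * th + 2 * mu) ^ 2)
               * eps ^ 2 * ah ^ 2)
         <= K * Rabs eps ^ 3).
Proof.
  intros Hl Hm Ht Hlt.
  assert (Hp : 0 < lam * th) by nra.
  assert (Hk0 : 0 < mu < lam * th / 2) by lra.
  assert (Ha : 0 < lam * th / mu) by (apply Rdiv_lt_0_compat; lra).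
  destruct phi_bound as [K1 [d1 [Hd1 HK1]]].
  destruct (Dfun_taylor mu (lam * th / 2) Hk0) as [K2 [d2 [Hd2 HK2]]].
  set (k0 := lam * th / 2) in *.
  set (a := lam * th / mu) in *.
  set (A := Rabs ah / a).
  assert (HA : 0 <= A) by (unfold A; apply Rmult_le_pos; [apply Rabs_pos| apply Rlt_le, Rinv_0_lt_compat; auto]).
  set (b := ah / (2 + a)).
  set (E0 := Efun mu k0).
  set (m := Rmin 1 (Rmin (d1/2) (Rmin (d2/(2*k0)) ((k0-mu)/(2*k0))))).
  assert (Hm1 : m <= 1) by apply Rmin_l.
  assert (Hm2 : m <= d1/2) by (eapply Rle_trans; [apply Rmin_r| apply Rmin_l]).
  assert (Hm3 : m <= d2/(2*k0)) by (eapply Rle_trans; [apply Rmin_r|]; eapply Rle_trans; [apply Rmin_r| apply Rmin_l]).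
  assert (Hm4 : m <= (k0-mu)/(2*k0)) by (eapply Rle_trans; [apply Rmin_r|]; eapply Rle_trans; [apply Rmin_r| apply Rmin_r]).
  assert (Hm0 : 0 < m).
  { unfold m. repeat apply Rmin_pos; try lra; apply Rdiv_lt_0_compat; lra. }
  exists (fun eps => Dfun mu (lam * th * (1 - sfun a (eps * ah) ^ 2) / 2)), (m / (A + 1)),
    (Rabs K2 * k0 ^ 2 * A ^ 4 + Rabs E0 * k0 * (Rabs K1 * A ^ 2 * (A + Rabs b) / (2 + a))).
  split. { apply Rdiv_lt_0_compat; lra. }
  intros eps Heps.
  set (s := sfun a (eps * ah)).
  set (e := Rabs eps).
  assert (He0 : 0 <= e) by apply Rabs_pos.
  assert (Hs : Rabs s <= A * e).
  { pose proof (sfun_bound a (eps * ah) Ha) as Hb. fold s in Hb.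
    rewrite Rabs_mult in Hb. unfold A, e. unfold Rdiv in *. lra. }
  assert (HAe : A * e < m).
  { assert ((A + 1) * e < m).
    { apply (Rmult_lt_compat_l (A + 1)) in Heps; [|lra].
      replace ((A + 1) * (m / (A + 1))) with m in Heps by (field; lra). auto. }
    nra. }
  assert (He1 : e < 1).
  { assert (m / (A + 1) <= m).
    { apply (Rmult_le_reg_r (A + 1)); [lra|]. unfold Rdiv. rewrite Rmult_assoc, Rinv_l; nra. }
    unfold e. lra. }
  pose proof (Rabs_pos s) as Hs0.
  assert (Hs2 : s ^ 2 < m).
  { rewrite <- pow2_abs. nra. }
  assert (Hs2' : s ^ 2 <= A ^ 2 * e ^ 2).
  { rewrite <- pow2_abs. nra. }
  assert (Hkap : lam * th * (1 - s ^ 2) / 2 = k0 - k0 * s ^ 2) by (unfold k0; field).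
  assert (Hk0pos : 0 < k0) by lra.
  assert (Hmk : 0 < mu < lam * th * (1 - s ^ 2) / 2).
  { rewrite Hkap. split; [lra|].
    assert (k0 * s ^ 2 < k0 * m) by (apply Rmult_lt_compat_l; lra).
    assert (k0 * m <= (k0 - mu) / 2).
    { apply (Rmult_le_compat_l k0) in Hm4; [|lra].
      replace (k0 * ((k0 - mu) / (2 * k0))) with ((k0 - mu)/2) in Hm4 by (field; lra). lra. }
    lra. }
  split; [|split; [|split]].
  - apply Dfun_pos. auto.
  - eexists; eexists. apply equil_exists; auto.
  - intros q1 q2 Hq Delta HD.
    pose proof (equil_cc lam mu th al eps ah q1 q2 Hl Hm Ht Hq) as Hc.
    fold a s in Hc.
    assert (Hk : 0 < mu < 2 * cc lam th al eps ah q1 q2) by (rewrite Hc; auto).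
    rewrite (stab_char lam mu th al eps ah q1 q2 Delta Hk HD).
    rewrite Hc. reflexivity.
  - rewrite Hkap.
    pose proof (coef_id lam mu th ah Hm Hlt Hp) as Hci. fold k0 a b E0 in Hci.
    replace ((4 * mu ^ 3 + mu ^ 2 * lam ^ 2 * th ^ 2 * Delta_cr lam mu th)
               / (4 * omega_cr lam mu th ^ 2 * (lam * th + 2 * mu) ^ 2) * eps ^ 2 * ah ^ 2)
      with ((4 * mu ^ 3 + mu ^ 2 * lam ^ 2 * th ^ 2 * Delta_cr lam mu th)
               / (4 * omega_cr lam mu th ^ 2 * (lam * th + 2 * mu) ^ 2) * ah ^ 2 * eps ^ 2) by ring.
    rewrite Hci. rewrite (Delta_cr_eq lam mu th Hm Hlt Hp). fold k0.
    replace (Dfun mu (k0 - k0 * s ^ 2) - Dfun mu k0 - - E0 * k0 * b ^ 2 * eps ^ 2)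
      with ((Dfun mu (k0 - k0 * s ^ 2) - Dfun mu k0 - E0 * ((k0 - k0 * s ^ 2) - k0))
            + (- E0 * k0) * ((s - b * eps) * (s + b * eps))) by ring.
    eapply Rle_trans; [apply Rabs_triang|].
    assert (HT1 : Rabs (Dfun mu (k0 - k0 * s ^ 2) - Dfun mu k0 - E0 * ((k0 - k0 * s ^ 2) - k0))
                  <= Rabs K2 * k0 ^ 2 * A ^ 4 * e ^ 3).
    { eapply Rle_trans; [apply HK2|].
      - replace (k0 - k0 * s ^ 2 - k0) with (- (k0 * s ^ 2)) by ring.
        rewrite Rabs_Ropp, Rabs_right; [|nra].
        assert (k0 * s ^ 2 < k0 * m) by (apply Rmult_lt_compat_l; lra).
        assert (k0 * m <= d2 / 2).
        { apply (Rmult_le_compat_l k0) in Hm3; [|lra].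
          replace (k0 * (d2 / (2 * k0))) with (d2 / 2) in Hm3 by (field; lra). lra. }
        lra.
      - replace ((k0 - k0 * s ^ 2 - k0) ^ 2) with (k0 ^ 2 * (s ^ 2) ^ 2) by ring.
        assert (Hq : (s ^ 2) ^ 2 <= A ^ 4 * e ^ 3).
        { assert (0 <= s^2) by nra.
          assert ((s^2)^2 <= (A^2 * e^2)^2) by (apply pow_incr; split; auto).
          assert (0 <= A^4 * e^3) by (apply Rmult_le_pos; apply pow_le; auto).
          assert (A^4 * e^3 * e <= A^4 * e^3 * 1) by (apply Rmult_le_compat_l; lra).
          replace ((A ^ 2 * e ^ 2) ^ 2) with (A^4 * e^3 * e) in * by ring. lra. }
        assert (K2 <= Rabs K2) by apply Rle_abs.
        assert (0 <= (s^2)^2) by nra.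
        assert (0 <= k0^2) by nra.
        assert (K2 * (k0 ^ 2 * (s ^ 2) ^ 2) <= Rabs K2 * (k0 ^ 2 * (s ^ 2) ^ 2)) by (apply Rmult_le_compat_r; [apply Rmult_le_pos|]; auto).
        assert (Rabs K2 * (k0 ^ 2 * (s ^ 2) ^ 2) <= Rabs K2 * (k0 ^ 2 * (A ^ 4 * e ^ 3))).
        { apply Rmult_le_compat_l; [apply Rabs_pos|]. apply Rmult_le_compat_l; auto. }
        nra. }
    assert (Hsd1 : Rabs s < d1) by lra.
    pose proof (HK1 s Hsd1) as HK1s.
    pose proof (sfun_ln a (eps * ah)) as Hln. fold s in Hln. rewrite Hln in HK1s.
    assert (H2a : 0 < 2 + a) by lra.
    assert (HX : Rabs (s - b * eps) <= Rabs K1 * s ^ 2 / (2 + a)).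
    { replace (s - b * eps) with ((- (-(a*s) + eps*ah - 2*s)) * / (2 + a)) by (unfold b; field; lra).
      rewrite Rabs_mult, Rabs_Ropp, (Rabs_right (/ (2 + a))); [| apply Rle_ge, Rlt_le, Rinv_0_lt_compat; lra].
      unfold Rdiv. apply Rmult_le_compat_r; [apply Rlt_le, Rinv_0_lt_compat; lra|].
      eapply Rle_trans; [apply HK1s|]. apply Rmult_le_compat_r; [nra| apply Rle_abs]. }
    assert (HY : Rabs (s + b * eps) <= (A + Rabs b) * e).
    { eapply Rle_trans; [apply Rabs_triang|]. rewrite Rabs_mult. fold e.
      pose proof (Rabs_pos b). nra. }
    assert (HXY : Rabs ((s - b * eps) * (s + b * eps)) <= Rabs K1 * A ^ 2 * (A + Rabs b) / (2 + a) * e ^ 3).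
    { rewrite Rabs_mult.
      assert (Rabs K1 * s ^ 2 / (2 + a) <= Rabs K1 * (A ^ 2 * e ^ 2) / (2 + a)).
      { unfold Rdiv. apply Rmult_le_compat_r; [apply Rlt_le, Rinv_0_lt_compat; lra|].
        apply Rmult_le_compat_l; [apply Rabs_pos|auto]. }
      eapply Rle_trans.
      { apply Rmult_le_compat; [apply Rabs_pos|apply Rabs_pos| |apply HY]. eapply Rle_trans; [apply HX|]. eauto. }
      right. field. lra. }
    assert (HT2 : Rabs (- E0 * k0 * ((s - b * eps) * (s + b * eps))) <=
                  Rabs E0 * k0 * (Rabs K1 * A ^ 2 * (A + Rabs b) / (2 + a)) * e ^ 3).
    { rewrite Rabs_mult, Rabs_mult, Rabs_Ropp, (Rabs_right k0); [|lra].
      replace (Rabs E0 * k0 * (Rabs K1 * A ^ 2 * (A + Rabs b) / (2 + a)) * e ^ 3)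
        with (Rabs E0 * k0 * (Rabs K1 * A ^ 2 * (A + Rabs b) / (2 + a) * e ^ 3)) by ring.
      apply Rmult_le_compat_l; [apply Rmult_le_pos; [apply Rabs_pos|lra]| exact HXY]. }
    fold e. lra.
Qed.
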